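(* Let $B, M \in \mathbb{Z}$ with $M(B^2-4M)\neq 0$. Then every equivalence class (for the relation $\sim$ below) of locally soluble forms in $W^B_M(\mathbb{Q})$ contains exactly one element of $\mathcal{F}^B_M$. In particular, every locally soluble $f=ax^4+Bx^2y^2+cy^4\in W^B_M(\mathbb{Q})$ with $a\in\mathbb{Z}$ and $0\le \operatorname{ord}_p a\le 1$ for all primes $p$ has $c\in\mathbb{Z}$.
   Context: For integers $B,M$, let $W^B_M(\mathbb{Q})$ (resp. $W^B_M(\mathbb{Z})$) be the set of binary quartic forms $f(x,y)=ax^4+Bx^2y^2+cy^4$ with $a,c\in\mathbb{Q}$ (resp. $a,c\in\mathbb{Z}$) and $ac=M$. A form $f$ is called locally soluble if for every place $v$ of $\mathbb{Q}$ (including $v=\infty$, $\mathbb{Q}_\infty=\mathbb{R}$) there exist $x,y,z\in\mathbb{Q}_v$ with $(x,y)\neq(0,0)$ and $z^2=f(x,y)$. Two forms $ax^4+Bx^2y^2+cy^4$ and $a'x^4+Bx^2y^2+c'y^4$ in $W^B_M(\mathbb{Q})$ are equivalent ($\sim$) if $a'=s^2a$ and $c'=s^{-2}c$ for some $s\in\mathbb{Q}^*$. Define $\mathcal{F}^B_M=\{ax^4+Bx^2y^2+cy^4\in W^B_M(\mathbb{Z}) : 0\le \operatorname{ord}_p a\le 1 \text{ for all primes } p\}$. *)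

(* Defs.v *)
From Stdlib Require Reals.
From HB Require Import structures.
From mathcomp Require Import all_boot all_order all_algebra.
From mathcomp Require Import Rstruct.
Set Implicit Arguments. Unset Strict Implicit. Unset Printing Implicit Defensive.
Import Order.TTheory GRing.Theory Num.Theory.
Local Open Scope ring_scope.

(* A binary quartic form a x^4 + B x^2 y^2 + c y^4 of W^B_M(Q) is encoded by
   the pair (a, c) of rationals (B is fixed); membership in W^B_M(Q) is a*c = M. *)
Definition inW (B M : int) (a c : rat) : Prop := a * c = M%:~R.

Definition form_equiv (a c a' c' : rat) : Prop :=
  exists s : rat, s != 0 /\ a' = s ^+ 2 * a /\ c' = s ^- 2 * c.

Definition real_soluble (B : int) (a c : rat) : Prop :=
  exists x y z : Rdefinitions.R, (x, y) <> (0, 0) /\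
    z ^+ 2 = ratr a * x ^+ 4 + B%:~R * x ^+ 2 * y ^+ 2 + ratr c * y ^+ 4.

(* ---------- the p-adic places ----------
   Z_p is realised as the inverse limit  lim Z/p^n Z : an element is a
   sequence X : nat -> int of representatives with X (n+1) = X n mod p^n,
   and an integral polynomial identity holds in Z_p iff it holds mod p^n at
   every level n (computed on the representatives). *)
Definition zp_elt (p : nat) (X : nat -> int) : Prop :=
  forall n : nat, (X n.+1 = X n %[mod (p ^ n)%N%:Z])%Z.

Definition zp_nonzero (p : nat) (X : nat -> int) : Prop :=
  exists n : nat, ~~ ((p ^ n)%N%:Z %| X n)%Z.

(* Every element of Q_p = Z_p[1/p] is X/p^k with X in Z_p; writing
   x = X/p^k, y = Y/p^k, z = Z/p^k and a = a1/d, c = c1/d with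
   d = denq a * denq c, the equation multiplied by the nonzero element
   d p^(4k) of the field Q_p becomes the Z_p-identity
      d p^(2k) Z^2 = a1 X^4 + d B X^2 Y^2 + c1 Y^4 . *)
Definition padic_soluble (p : nat) (B : int) (a c : rat) : Prop :=
  let d := denq a * denq c in
  let a1 := numq a * denq c in
  let c1 := numq c * denq a in
  exists (k : nat) (X Y Z : nat -> int),
    [/\ zp_elt p X, zp_elt p Y, zp_elt p Z,
        zp_nonzero p X \/ zp_nonzero p Y &
        forall n : nat,
          ((p ^ n)%N%:Z %|
             d * (p ^ (2 * k))%N%:Z * Z n ^+ 2
             - (a1 * X n ^+ 4 + d * B * X n ^+ 2 * Y n ^+ 2 + c1 * Y n ^+ 4))%Z].

Definition locally_soluble (B : int) (a c : rat) : Prop :=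
  real_soluble B a c /\ forall p : nat, prime p -> padic_soluble p B a c.

(* The set F^B_M : a, c integers, a*c = M, 0 <= ord_p a <= 1 for all primes p.
   (For a nonzero integer a, ord_p a >= 0 is automatic and ord_p a = logn p |a|.) *)
Definition inF (B M : int) (a c : int) : Prop :=
  a * c = M /\ forall p : nat, prime p -> (logn p `|a|%N <= 1)%N.

(* Main.v *)
Require Import Defs.
From HB Require Import structures.
From mathcomp Require Import all_boot all_order all_algebra.
Import Order.TTheory GRing.Theory Num.Theory.
Local Open Scope ring_scope.
From mathcomp Require Import zify ring.
From Stdlib Require Import Classical.

Definition vp (p : nat) (t : int) : nat := logn p `|t|%N.

Lemma vpM p (t u : int) : t != 0 -> u != 0 -> vp p (t * u) = (vp p t + vp p u)%N.
Proof.
move=> ht hu; rewrite /vp abszM lognM // absz_gt0 //.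
Qed.

Lemma vpX p (t : int) n : vp p (t ^+ n) = (n * vp p t)%N.
Proof. by rewrite /vp abszX lognX. Qed.

Lemma vp_pow p n : prime p -> vp p (p ^ n)%N%:Z = n.
Proof. by move=> pp; rewrite /vp absz_nat pfactorK. Qed.

Lemma dvd_vp p k (t : int) : prime p -> t != 0 ->
  ((p ^ k)%N%:Z %| t)%Z = (k <= vp p t)%N.
Proof.
move=> pp ht; rewrite dvdzE absz_nat pfactor_dvdn // absz_gt0 //.
Qed.

Lemma dvd_vp_self p (t : int) : prime p -> ((p ^ vp p t)%N%:Z %| t)%Z.
Proof.
move=> pp; have [->|ht] := eqVneq t 0; first by rewrite dvdz0.
by rewrite dvd_vp.
Qed.

Lemma dvd_pow_le p m n (t : int) : (m <= n)%N -> ((p ^ n)%N%:Z %| t)%Z -> ((p ^ m)%N%:Z %| t)%Z.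
Proof.
move=> hmn; apply: dvdz_trans; rewrite dvdzE !absz_nat; exact: dvdn_exp2l.
Qed.
Arguments dvd_pow_le {p m n t}.
Arguments dvd_vp_self {p} t.
Lemma core p (A C L Bm x y z : int) (d N : nat) : prime p ->
  A != 0 -> C != 0 -> L != 0 -> ((p ^ d)%N%:Z %| Bm)%Z ->
  (2 * d = vp p A + vp p C)%N -> ((vp p A + vp p L) %% 2 = 1)%N ->
  x != 0 -> (y = 0 \/ (y != 0 /\ (vp p A + 4 * vp p x < vp p C + 4 * vp p y)%N)) ->
  (vp p A + 4 * vp p x < N)%N ->
  ((p ^ N)%N%:Z %| L * z ^+ 2 - (A * x ^+ 4 + Bm * x ^+ 2 * y ^+ 2 + C * y ^+ 4))%Z ->
  False.
Proof.
move=> pp hA hC hL hB hd hpar hx hy hN hdiv.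
set m := (vp p A + 4 * vp p x)%N.
have hT1 : A * x ^+ 4 != 0 by rewrite mulf_neq0 // expf_neq0.
have vT1 : vp p (A * x ^+ 4) = m by rewrite vpM ?expf_neq0 // vpX.
have h23 : ((p ^ m.+1)%N%:Z %| Bm * x ^+ 2 * y ^+ 2 + C * y ^+ 4)%Z.
  case: hy => [->|[hy0 hlt]]; first by rewrite expr0n /= !mulr0 addr0 dvdz0.
  apply: rpredD.
    apply: (@dvd_pow_le _ _ (d + (2 * vp p x + 2 * vp p y))%N); first by rewrite /m; clear -hd hlt; lia.
    rewrite expnD PoszM -mulrA; apply: dvdz_mul => //.
    rewrite expnD PoszM; apply: dvdz_mul.
      by apply: (dvd_pow_le _ (dvd_vp_self _ pp)); rewrite vpX.
    by apply: (dvd_pow_le _ (dvd_vp_self _ pp)); rewrite vpX.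
  rewrite dvd_vp ?mulf_neq0 ?expf_neq0 // vpM ?expf_neq0 // vpX; rewrite /m; clear -hlt; lia.
have hR1 : ((p ^ m)%N%:Z %| A * x ^+ 4 + Bm * x ^+ 2 * y ^+ 2 + C * y ^+ 4)%Z.
  rewrite -addrA; apply: rpredD; first by rewrite dvd_vp // vT1.
  exact: dvd_pow_le (leqnSn _) h23.
have hR2 : ~~ ((p ^ m.+1)%N%:Z %| A * x ^+ 4 + Bm * x ^+ 2 * y ^+ 2 + C * y ^+ 4)%Z.
  rewrite -addrA; apply/negP => h; move: (rpredB h h23); rewrite addrK.
  by rewrite dvd_vp // vT1 ltnn.
have hD := dvd_pow_le hN hdiv.
have hL1 : ((p ^ m)%N%:Z %| L * z ^+ 2)%Z.
  rewrite -(subrK (A * x ^+ 4 + Bm * x ^+ 2 * y ^+ 2 + C * y ^+ 4) (L * z ^+ 2)).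
  by apply: rpredD => //; exact: dvd_pow_le (leqnSn _) hD.
have hL2 : ~~ ((p ^ m.+1)%N%:Z %| L * z ^+ 2)%Z.
  apply/negP => h; move/negP: hR2; apply.
  set R := (A * x ^+ 4 + _ + _).
  rewrite (_ : R = L * z ^+ 2 - (L * z ^+ 2 - R)); first exact: rpredB.
  by rewrite opprB addrC subrK.
have hz : z != 0.
  by apply/eqP => hz0; move: hL2; rewrite hz0 expr0n /= mulr0 dvdz0.
have hLz : L * z ^+ 2 != 0 by rewrite mulf_neq0 // expf_neq0.
move: hL1 hL2; rewrite !dvd_vp // vpM ?expf_neq0 // vpX => h1 h2.
have e : (vp p L + 2 * vp p z = m)%N by clear -h1 h2; lia.
rewrite /m in e; clear -e hpar; lia.
Qed.
Arguments core {p A C L Bm x y z d N}.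
Lemma level p (A C L Bm x y z : int) (d N : nat) : prime p ->
  A != 0 -> C != 0 -> L != 0 -> ((p ^ d)%N%:Z %| Bm)%Z ->
  (2 * d = vp p A + vp p C)%N -> ((vp p A + d) %% 2 = 1)%N ->
  ((vp p A + vp p L) %% 2 = 1)%N ->
  ((x != 0 /\ (vp p A + 4 * vp p x < N)%N) \/ (y != 0 /\ (vp p C + 4 * vp p y < N)%N)) ->
  ((p ^ N)%N%:Z %| L * z ^+ 2 - (A * x ^+ 4 + Bm * x ^+ 2 * y ^+ 2 + C * y ^+ 4))%Z ->
  False.
Proof.
move=> pp hA hC hL hB hd hd2 hpar hxy hdiv.
have hpar' : ((vp p C + vp p L) %% 2 = 1)%N by clear -hd hpar; lia.
have hd' : (2 * d = vp p C + vp p A)%N by clear -hd; lia.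
have hdiv' : ((p ^ N)%N%:Z %| L * z ^+ 2 - (C * y ^+ 4 + Bm * y ^+ 2 * x ^+ 2 + A * x ^+ 4))%Z.
  by move: hdiv; congr (_ %| (_ - _))%Z; ring.
have hne : (vp p A + 4 * vp p x)%N <> (vp p C + 4 * vp p y)%N by clear -hd hd2; lia.
case: hxy => [[hx hN]|[hy hN]].
  have [hy0|hy] := eqVneq y 0; first by subst y; apply: (core pp hA hC hL hB hd hpar hx _ hN hdiv); left.
  case: (ltngtP (vp p A + 4 * vp p x) (vp p C + 4 * vp p y)) => h.
  - by apply: (core pp hA hC hL hB hd hpar hx _ hN hdiv); right.
  - apply: (core pp hC hA hL hB hd' hpar' hy _ _ hdiv'); [right; split=> // | clear -h hN; lia].
  - exact: (hne h).
have [hx0|hx] := eqVneq x 0; first by subst x; apply: (core pp hC hA hL hB hd' hpar' hy _ hN hdiv'); left.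
case: (ltngtP (vp p A + 4 * vp p x) (vp p C + 4 * vp p y)) => h.
- apply: (core pp hA hC hL hB hd hpar hx _ _ hdiv); [right; split=> // | clear -h hN; lia].
- by apply: (core pp hC hA hL hB hd' hpar' hy _ hN hdiv'); right.
- exact: (hne h).
Qed.

Set Implicit Arguments. Unset Strict Implicit.

Lemma zp_cong p X : zp_elt p X -> forall n j, ((p ^ n)%N%:Z %| X (n + j)%N - X n)%Z.
Proof.
move=> hX n; elim=> [|j IH]; first by rewrite addn0 subrr dvdz0.
rewrite addnS (_ : X (n + j).+1 - X n = (X (n + j).+1 - X (n + j)) + (X (n + j)%N - X n)); last first.
  by rewrite addrA subrK.
apply: rpredD => //; apply: (@dvd_pow_le _ _ (n + j)%N); first exact: leq_addr.
by rewrite -eqz_mod_dvd; apply/eqP; apply: hX.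
Qed.

Lemma zp_nz p X : prime p -> zp_elt p X -> zp_nonzero p X ->
  exists n0, forall N, (n0 <= N)%N -> X N != 0 /\ (vp p (X N) < n0)%N.
Proof.
move=> pp hX [n0 hn0]; exists n0 => N hN.
have hc := zp_cong hX n0 (N - n0); rewrite subnKC // in hc.
have hXN : ~~ ((p ^ n0)%N%:Z %| X N)%Z.
  apply/negP => h; move/negP: hn0; apply.
  rewrite (_ : X n0 = X N - (X N - X n0)); first exact: rpredB.
  by rewrite opprB addrC subrK.
have hne : X N != 0 by apply/eqP => e; move: hXN; rewrite e dvdz0.
by split=> //; move: hXN; rewrite dvd_vp // -ltnNge.
Qed.
Lemma num_den_id (a c : rat) (M : int) : a * c = M%:~R ->
  numq a * numq c = M * denq a * denq c.
Proof.
move=> h; apply: (@intr_inj rat); rewrite !rmorphM /= -h.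
have kx : forall x : rat, x * (denq x)%:~R = (numq x)%:~R.
  move=> x; rewrite -{1}(divq_num_den x) mulrVK //.
  by rewrite unitfE intr_eq0 denq_neq0.
by rewrite -kx -kx; ring.
Qed.

Lemma key p (B M : int) (a c : rat) : prime p -> ~~ (p%:Z %| M)%Z -> a * c = M%:~R ->
  padic_soluble p B a c -> ((vp p (numq a) + vp p (denq a)) %% 2 = 0)%N.
Proof.
move=> pp hpM hac hsol.
case: (boolP ((vp p (numq a) + vp p (denq a)) %% 2 == 0)%N) => [/eqP//|hodd]; exfalso; move/eqP: hodd => hodd.
have hM : M != 0 by apply/eqP => e; move: hpM; rewrite e dvdz0.
have ha : a != 0 by apply/eqP => e; move: hac; rewrite e mul0r => /eqP; rewrite eq_sym intr_eq0 (negbTE hM).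
have hc : c != 0 by apply/eqP => e; move: hac; rewrite e mulr0 => /eqP; rewrite eq_sym intr_eq0 (negbTE hM).
have hna : numq a != 0 by rewrite numq_eq0.
have hnc : numq c != 0 by rewrite numq_eq0.
have hda := denq_neq0 a; have hdc := denq_neq0 c.
have vM : vp p M = 0%N.
  have h : ~~ ((p ^ 1)%N%:Z %| M)%Z by rewrite expn1.
  move: h; rewrite dvd_vp // => h; clear -h; lia.
have hid := num_den_id hac.
have vid : (vp p (numq a) + vp p (numq c) = vp p (denq a) + vp p (denq c))%N.
  have := congr1 (vp p) hid; rewrite vpM // -mulrA vpM ?mulf_neq0 // vpM // vM.
  by move=> ->.
move: hsol; rewrite /padic_soluble => -[k [X [Y [Z [hX hY hZ hnz hdiv]]]]].
set A := numq a * denq c; set C := numq c * denq a.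
set d := denq a * denq c.
set L := d * (p ^ (2 * k))%N%:Z.
have hA : A != 0 by rewrite mulf_neq0.
have hC : C != 0 by rewrite mulf_neq0.
have hd0 : d != 0 by rewrite mulf_neq0.
have hp0 : (p ^ (2 * k))%N%:Z != 0 by rewrite -absz_gt0 absz_nat expn_gt0 prime_gt0.
have hL : L != 0 by rewrite mulf_neq0.
have vA : vp p A = (vp p (numq a) + vp p (denq c))%N by rewrite vpM.
have vC : vp p C = (vp p (numq c) + vp p (denq a))%N by rewrite vpM.
have vL : vp p L = (vp p (denq a) + vp p (denq c) + 2 * k)%N by rewrite vpM // vpM // vp_pow.
have hB : ((p ^ (vp p (denq a) + vp p (denq c)))%N%:Z %| d * B)%Z.
  apply: dvdz_mulr; rewrite expnD PoszM; apply: dvdz_mul; exact: dvd_vp_self.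
have [n0 hn0] : exists n0, forall N, (n0 <= N)%N ->
    (X N != 0 /\ (vp p (X N) < n0)%N) \/ (Y N != 0 /\ (vp p (Y N) < n0)%N).
  case: hnz => hnz.
    have [n0 h] := zp_nz pp hX hnz; exists n0 => N hN; left; exact: h.
  have [n0 h] := zp_nz pp hY hnz; exists n0 => N hN; right; exact: h.
set N := (vp p A + vp p C + 4 * n0 + n0)%N.
have hN : (n0 <= N)%N by rewrite /N; clear; lia.
apply: (@level p A C L (d * B) (X N) (Y N) (Z N) (vp p (denq a) + vp p (denq c)) N pp hA hC hL hB).
- rewrite vA vC; clear -vid; lia.
- rewrite vA; clear -vid hodd; lia.
- rewrite vA vL; clear -hodd; lia.
- case: (hn0 N hN) => [[h1 h2]|[h1 h2]]; [left|right]; split => //; move: h2; rewrite /N; clear; lia.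
- exact: hdiv.
Qed.

Lemma vp_ge1 p (t : int) : prime p -> t != 0 -> (1 <= vp p t)%N -> (p %| `|t|)%N.
Proof. by move=> pp ht; rewrite -dvd_vp // expn1 dvdzE absz_nat. Qed.

Lemma intc (M a0 : int) (c : rat) : M != 0 ->
  (forall p, prime p -> (logn p `|a0|%N <= 1)%N) -> a0%:~R * c = M%:~R ->
  (forall p, prime p -> vp p a0 = 1%N -> (p%:Z %| M)%Z) -> exists c0 : int, c = c0%:~R.
Proof.
move=> hM hsq hac hdiv.
have ha0 : a0 != 0 by apply/eqP => e; move: hac; rewrite e mul0r => /eqP; rewrite eq_sym intr_eq0 (negbTE hM).
have hc : c != 0 by apply/eqP => e; move: hac; rewrite e mulr0 => /eqP; rewrite eq_sym intr_eq0 (negbTE hM).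
have hu : numq c != 0 by rewrite numq_eq0.
have hw := denq_neq0 c.
have [hw1|hw1] := eqVneq (denq c) 1.
  by exists (numq c); rewrite -{1}(divq_num_den c) hw1 divr1.
have hid := num_den_id hac; rewrite numq_int denq_int mulr1 in hid.
have hgt : (1 < `|denq c|)%N.
  have h0 := denq_gt0 c.
  have e : denq c = (`|denq c|%N)%:Z by rewrite abszE gtr0_norm.
  rewrite ltn_neqAle absz_gt0 hw andbT; apply/negP => /eqP e1.
  by move: hw1; rewrite e -e1.
set p := pdiv `|denq c|.
have pp : prime p by apply: pdiv_prime.
have hpw : (p %| `|denq c|)%N by apply: pdiv_dvd.
have vw : (1 <= vp p (denq c))%N by rewrite -dvd_vp // expn1 dvdzE absz_nat.
have vu : vp p (numq c) = 0%N.
  apply/eqP; rewrite -leqn0 leqNgt; apply/negP => h.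
  have := vp_ge1 pp hu h => hpu.
  have := coprime_num_den c; rewrite /coprime => /eqP hg.
  have : (p %| gcdn `|numq c| `|denq c|)%N by rewrite dvdn_gcd hpu hpw.
  by rewrite hg dvdn1 => /eqP e; move: pp; rewrite e.
have vid := congr1 (vp p) hid; rewrite !vpM // in vid.
have hl := hsq p pp; rewrite -/(vp p a0) in hl.
have e1 : vp p a0 = 1%N by clear -vid vu vw hl; lia.
have := hdiv p pp e1; rewrite -[X in (X%:Z %| _)%Z](expn1 p) dvd_vp // => h.
by clear -h vid vu vw e1; lia.
Qed.

Lemma sqf_dec : forall n : nat, (0 < n)%N -> exists q r : nat,
  (0 < q)%N /\ n = (q ^ 2 * r)%N /\ forall p, prime p -> (logn p r <= 1)%N.
Proof.
elim/ltn_ind => n IH hn.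
case: (classic (forall p, prime p -> (logn p n <= 1)%N)) => [h|h].
  by exists 1%N, n; rewrite exp1n mul1n.
have [p hp] := not_all_ex_not _ _ h.
case: (boolP (prime p)) => pp; last by exfalso; apply: hp => h'; rewrite h' in pp.
have hl : (1 < logn p n)%N by rewrite ltnNge; apply/negP => h'; apply: hp.
have hd : (p ^ 2 %| n)%N by rewrite pfactor_dvdn.
have hp2 : (1 < p ^ 2)%N by rewrite (ltn_trans (prime_gt1 pp)) // -{1}(expn1 p) ltn_exp2l // prime_gt1.
set n' := (n %/ p ^ 2)%N.
have en : n = (n' * p ^ 2)%N by rewrite divnK.
have hn' : (0 < n')%N by move: hn; rewrite en muln_gt0 => /andP[].
have lt : (n' < n)%N by rewrite [X in (_ < X)%N]en -{1}(muln1 n') ltn_pmul2l.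
have [q [r [hq [er hr]]]] := IH n' lt hn'.
exists (p * q)%N, r; split; first by rewrite muln_gt0 prime_gt0.
by split => //; rewrite en er; ring.
Qed.

Lemma kx (x : rat) : x * (denq x)%:~R = (numq x)%:~R.
Proof.
rewrite -{1}(divq_num_den x) mulrVK //.
by rewrite unitfE intr_eq0 denq_neq0.
Qed.

Lemma nz_of (M a c : int) : M != 0 -> a * c = M -> a != 0.
Proof. by move=> hM h; apply/eqP => e; move: hM; rewrite -h e mul0r eqxx. Qed.

Lemma uniq_part (M a0 c0 a1 c1 : int) (a : rat) s t : M != 0 ->
  a0 * c0 = M -> (forall p, prime p -> (logn p `|a0|%N <= 1)%N) ->
  a1 * c1 = M -> (forall p, prime p -> (logn p `|a1|%N <= 1)%N) ->
  s != 0 -> a0%:~R = s ^+ 2 * a -> t != 0 -> a1%:~R = t ^+ 2 * a ->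
  a0 = a1 /\ c0 = c1.
Proof.
move=> hM h0 hs0 h1 hs1 hs ea0 ht ea1.
have ha0 := nz_of hM h0; have ha1 := nz_of hM h1.
set r := t / s.
have hr : r != 0 by rewrite mulf_neq0 ?invr_eq0.
have er : a1%:~R = r ^+ 2 * a0%:~R :> rat.
  by rewrite ea1 ea0 /r; field.
have hnr : numq r != 0 by rewrite numq_eq0.
have hdr := denq_neq0 r.
have eid : a1 * denq r ^+ 2 = numq r ^+ 2 * a0.
  apply: (@intr_inj rat); rewrite !rmorphM /= er -kx; ring.
have hlog : forall p, prime p -> logn p `|a0|%N = logn p `|a1|%N.
  move=> p pp; have := congr1 (vp p) eid.
  rewrite !vpM ?expf_neq0 // ?vpX => e.
  have := hs0 p pp; have := hs1 p pp; rewrite /vp in e; clear -e; lia.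
have habs : `|a0|%N = `|a1|%N.
  have g0 : (0 < `|a0|)%N by rewrite absz_gt0.
  have g1 : (0 < `|a1|)%N by rewrite absz_gt0.
  rewrite -(partnT g0) -(partnT g1).
  apply: eq_partn_from_log => // p _.
  case: (boolP (prime p)) => pp; first exact: hlog.
  by rewrite [in LHS]lognE [in RHS]lognE (negbTE pp).
have hsg : sgz a0 = sgz a1.
  have := congr1 (@sgz _) eid; rewrite sgzM [in RHS]sgzM.
  have g1 : sgz (denq r ^+ 2) = 1 by apply: gtr0_sgz; rewrite lt0r sqr_ge0 andbT expf_neq0.
  have g2 : sgz (numq r ^+ 2) = 1 by apply: gtr0_sgz; rewrite lt0r sqr_ge0 andbT expf_neq0.
  by rewrite g1 g2 mulr1 mul1r.
have e01 : a0 = a1 by rewrite (intEsg a0) (intEsg a1) hsg habs.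
split => //; apply: (mulfI ha0); rewrite h0 e01 h1 //.
Qed.


Unset Implicit Arguments. Set Strict Implicit.

Theorem lemma3p1 (B M : int) (hBM : M * (B ^+ 2 - 4 * M) != 0) :
  (forall a c : rat, inW B M a c -> locally_soluble B a c ->
     (exists a0 c0 : int, inF B M a0 c0 /\ form_equiv a c a0%:~R c0%:~R) /\
     (forall a0 c0 a1 c1 : int,
        inF B M a0 c0 -> form_equiv a c a0%:~R c0%:~R ->
        inF B M a1 c1 -> form_equiv a c a1%:~R c1%:~R ->
        a0 = a1 /\ c0 = c1)) /\
  (forall (a c : rat) (a0 : int), inW B M a c -> locally_soluble B a c ->
     a = a0%:~R -> (forall p : nat, prime p -> (logn p `|a0|%N <= 1)%N) ->
     exists c0 : int, c = c0%:~R).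
Proof.
have hM : M != 0 by move: hBM; rewrite mulf_eq0 negb_or => /andP[].
have hMr : (M%:~R : rat) != 0 by rewrite intr_eq0.
split; last first.
  move=> a c a0 hW [_ hls] ea hsq.
  apply: (intc hM hsq); first by rewrite -ea.
  move=> p pp e1; apply/negPn/negP => hpM.
  have := key pp hpM hW (hls p pp); rewrite ea numq_int denq_int.
  by rewrite e1 /vp /= logn1.
move=> a c hW [_ hls]; split; last first.
  move=> a0 c0 a1 c1 [h0 hs0] [s [hs [ea0 _]]] [h1 hs1] [t [ht [ea1 _]]].
  exact: (uniq_part hM h0 hs0 h1 hs1 hs ea0 ht ea1).
have ha : a != 0.
  by apply/eqP => e; move: hW; rewrite /inW e mul0r => e'; move: hMr; rewrite -e' eqxx.
have hna : numq a != 0 by rewrite numq_eq0.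
have hda := denq_neq0 a.
set n := numq a * denq a.
have hn : n != 0 by rewrite mulf_neq0.
have hn' : (0 < `|n|)%N by rewrite absz_gt0.
have [q [r [hq [er hr]]]] := sqf_dec hn'.
set a0 : int := (-1) ^+ (n < 0)%R * r%:Z.
have hq0 : (q%:R : rat) != 0 by rewrite pnatr_eq0 -lt0n.
set s := (denq a)%:~R / (q%:R : rat).
have hs : s != 0 by rewrite mulf_neq0 ?invr_eq0 ?intr_eq0.
have ni : n = a0 * (q ^ 2)%N%:Z.
  rewrite {1}(numEsign n) -abszE er /a0 PoszM; ring.
have E : a0%:~R = s ^+ 2 * a.
  apply: (mulIf (expf_neq0 2 hq0)).
  have -> : s ^+ 2 * a * q%:R ^+ 2 = (a * (denq a)%:~R) * (denq a)%:~R.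
    by rewrite /s; field.
  rewrite kx -rmorphM /= -/n ni [RHS]rmorphM /=; congr (_ * _).
  by rewrite -natrX.
have habs : `|a0|%N = r by rewrite /a0 abszM abszX /= exp1n mul1n.
have [c0 hc0] : exists c0 : int, s ^- 2 * c = c0%:~R.
  have hsq0 : forall p, prime p -> (logn p `|a0|%N <= 1)%N.
    by move=> p pp; rewrite habs; exact: hr.
  apply: (intc hM hsq0).
    by rewrite E; move: hW; rewrite /inW => <-; rewrite mulrACA mulrV ?mul1r // unitfE expf_neq0.
  move=> p pp e1; apply/negPn/negP => hpM.
  have := key pp hpM hW (hls p pp).
  have e : vp p n = (vp p (numq a) + vp p (denq a))%N by rewrite /n vpM.
  have hr0 : (0 < r)%N by move: hn'; rewrite er muln_gt0 => /andP[].
  rewrite -e /vp er lognM ?expn_gt0 ?hq ?hr0 // ?lognX.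
  move: e1; rewrite /vp habs => e1; rewrite e1.
  by move=> h; clear -h; lia.
exists a0, c0; split; last by exists s; split => //; split => //.
split; last by move=> p pp; rewrite habs; exact: hr.

apply: (@intr_inj rat); rewrite rmorphM /= -hc0 E.
move: hW; rewrite /inW => <-.
by rewrite mulrACA mulrV ?mul1r // unitfE expf_neq0.
Qed.
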